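(* Let $T$ be a first-order $\mathscr L$-theory, $\mathcal U_{\mathcal K}=\mathrm{Mod}(T_\forall)$, and $A\in\mathcal U_{\mathcal K}$. Then $A$ is weakly geometrically closed in $\mathcal U_{\mathcal K}$ if and only if for every finite tuple of variables $\bar x$ and every finite $a$-type $\pi$ of $A[\bar x]$, with $V=\pi(A)$, one has $tp_a^A(V)=\sqrt[T]{\pi}$ (the strong $T$-radical).
   Context: $T_\forall$: consequences of $T$ of the form $\forall\bar y(\bigwedge\Phi\to\bigvee\Psi)$, $\Phi,\Psi$ finite sets of atomic formulas. A homomorphism $f:A\to B$ is geometrically closed if every sentence $\forall\bar y\,(\bigwedge\Phi(\bar a,\bar y)\to\psi(\bar a,\bar y))$ ($\Phi\cup\{\psi\}$ finite sets of atomic formulas, parameters from $A$) true in $A$ holds in $B$ of $f\bar a$. $A$ is weakly geometrically closed in a class $\mathcal C$ if every embedding of $A$ into a member of $\mathcal C$ is geometrically closed. $A[\bar x]$ is the $\mathscr L(A)$-structure freely generated over $A$ by $\bar x$ (quotient by $D^+A$ of the term algebra of $\mathscr L\sqcup A\sqcup\bar x$); an $a$-type of $A[\bar x]$ is a set of atomic $\mathscr L(A)$-formulas in $\bar x$; it is closed if it contains every atomic formula implied by $D^+(A[\bar x])\cup\pi$, and $A[\bar x]/\pi$ is the corresponding quotient (terms identified and relations holding exactly when implied). $\pi$ is strongly $T$-prime if closed, $A[\bar x]/\pi\models T_\forall$ and $A\to A[\bar x]\to A[\bar x]/\pi$ is an embedding; $\sqrt[T]{\pi}$ is the intersection of strongly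 $T$-prime $a$-types containing $\pi$. $\pi(A)=\{\bar a:A\models\bigwedge\pi(\bar a)\}$; $tp_a^A(V)$ is the set of atomic $\mathscr L(A)$-formulas in $\bar x$ true of every point of $V$. *)

(* Defs.v *)
From Stdlib Require Import List ClassicalEpsilon.
From Stdlib Require Fin.
Set Implicit Arguments.
Unset Strict Implicit.

(** * Signatures (function symbols include constants as 0-ary symbols) *)
Record signature := Signature {
  func : Type; fun_ar : func -> nat;
  rel : Type; rel_ar : rel -> nat }.

Section FOL.
Variable L : signature.

(** Terms over a type V of leaves (variables and/or parameter constants). *)
Inductive term (V : Type) : Type :=
| tvar : V -> term V
| tapp : forall f : func L, (Fin.t (@fun_ar L f) -> term V) -> term V.
Arguments tvar {V} v.
Arguments tapp {V} f args.

Inductive atom (V : Type) : Type :=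
| aeq : term V -> term V -> atom V
| arel : forall r : rel L, (Fin.t (@rel_ar L r) -> term V) -> atom V.
Arguments aeq {V} t s.
Arguments arel {V} r args.

Fixpoint map_term (V W : Type) (g : V -> W) (t : term V) : term W :=
  match t with
  | tvar v => tvar (g v)
  | tapp f args => tapp f (fun i => map_term g (args i))
  end.

Definition map_atom (V W : Type) (g : V -> W) (a : atom V) : atom W :=
  match a with
  | aeq t s => aeq (map_term g t) (map_term g s)
  | arel r args => arel r (fun i => map_term g (args i))
  end.

Inductive formula : Type :=
| fatom : atom nat -> formula
| fbot : formula
| fnot : formula -> formula
| fand : formula -> formula -> formula
| f_or : formula -> formula -> formula
| fimp : formula -> formula -> formula
| fall : nat -> formula -> formula
| fex : nat -> formula -> formula.

Fixpoint occurs (V : Type) (x : V) (t : term V) : Prop :=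
  match t with
  | tvar y => x = y
  | tapp f args => exists i, occurs x (args i)
  end.

Definition occurs_atom (x : nat) (a : atom nat) : Prop :=
  match a with
  | aeq t s => occurs x t \/ occurs x s
  | arel r args => exists i, occurs x (args i)
  end.

Fixpoint free_in (x : nat) (phi : formula) : Prop :=
  match phi with
  | fatom a => occurs_atom x a
  | fbot => False
  | fnot p => free_in x p
  | fand p q | f_or p q | fimp p q => free_in x p \/ free_in x q
  | fall y p | fex y p => x <> y /\ free_in x p
  end.

Definition sentence (phi : formula) : Prop := forall x, ~ free_in x phi.

(** A theory is a set of sentences (the sentence condition is a hypothesis). *)
Definition theory := formula -> Prop.

Record structure := Structure {
  carrier :> Type;
  fint : forall f : func L, (Fin.t (@fun_ar L f) -> carrier) -> carrier;
  rint : forall r : rel L, (Fin.t (@rel_ar L r) -> carrier) -> Prop }.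
Arguments fint s f args : clear implicits.
Arguments rint s r args : clear implicits.

Fixpoint eval (M : structure) (V : Type) (v : V -> M) (t : term V) : M :=
  match t with
  | tvar x => v x
  | tapp f args => fint M f (fun i => eval v (args i))
  end.

Definition atom_sat (M : structure) (V : Type) (v : V -> M) (a : atom V) : Prop :=
  match a with
  | aeq t s => eval v t = eval v s
  | arel r args => rint M r (fun i => eval v (args i))
  end.

Definition update (M : Type) (rho : nat -> M) (x : nat) (m : M) : nat -> M :=
  fun y => if Nat.eqb y x then m else rho y.

Fixpoint sat (M : structure) (rho : nat -> M) (phi : formula) : Prop :=
  match phi with
  | fatom a => atom_sat rho a
  | fbot => False
  | fnot p => ~ sat rho p
  | fand p q => sat rho p /\ sat rho q
  | f_or p q => sat rho p \/ sat rho q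
  | fimp p q => sat rho p -> sat rho q
  | fall x p => forall m : M, sat (update rho x m) p
  | fex x p => exists m : M, sat (update rho x m) p
  end.

Definition model (T : theory) (M : structure) : Prop :=
  inhabited M /\ forall phi, T phi -> forall rho : nat -> M, sat rho phi.

(** The universal sentence  forall y (/\ Phi -> \/ Psi)  (closing all variables)
    holds in M. *)
Definition univ_holds (M : structure) (Phi Psi : list (atom nat)) : Prop :=
  forall rho : nat -> M,
    (forall a, In a Phi -> atom_sat rho a) -> exists b, In b Psi /\ atom_sat rho b.

Definition T_forall (T : theory) (Phi Psi : list (atom nat)) : Prop :=
  forall M : structure, model T M -> univ_holds M Phi Psi.

Definition Mod_T_forall (T : theory) (M : structure) : Prop :=
  inhabited M /\ forall Phi Psi, T_forall T Phi Psi -> univ_holds M Phi Psi.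

Definition homomorphism (A B : structure) (h : A -> B) : Prop :=
  (forall f args, h (fint A f args) = fint B f (fun i => h (args i))) /\
  (forall r args, rint A r args -> rint B r (fun i => h (args i))).

Definition embedding (A B : structure) (h : A -> B) : Prop :=
  homomorphism h /\ (forall a a', h a = h a' -> a = a') /\
  (forall r args, rint B r (fun i => h (args i)) -> rint A r args).

Definition pval (P V M : Type) (e : P -> M) (rho : V -> M) : P + V -> M :=
  fun z => match z with inl p => e p | inr y => rho y end.

Definition geom_closed (A B : structure) (h : A -> B) : Prop :=
  forall (Phi : list (atom (A + nat))) (psi : atom (A + nat)),
    (forall rho : nat -> A,
        (forall a, In a Phi -> atom_sat (pval (fun x => x) rho) a) ->
        atom_sat (pval (fun x => x) rho) psi) ->
    (forall rho : nat -> B,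
        (forall a, In a Phi -> atom_sat (pval h rho) a) ->
        atom_sat (pval h rho) psi).

Definition weakly_geom_closed (A : structure) (C : structure -> Prop) : Prop :=
  forall B : structure, C B -> forall h : A -> B, embedding h -> geom_closed h.

Section Free.
Variable A : structure.
Variable X : Type.

(** L(A)-terms / atomic L(A)-formulas in x : leaves are A-constants (inl) or
    variables of X (inr). An a-type of A[x] is a set of such atomic formulas. *)
Definition atype := atom (A + X) -> Prop.

Definition implied (Sigma : atype) (phi : atom (A + X)) : Prop :=
  forall (M : structure) (v : A + X -> M),
    (forall psi, Sigma psi -> atom_sat v psi) -> atom_sat v phi.

Definition diagA : atype :=
  fun phi => exists phi0 : atom A, phi = map_atom inl phi0 /\ atom_sat (fun a => a) phi0.

(** The quotient of the term algebra of L + A + x by the atomic consequences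
    of Sigma: terms identified, relations holding exactly when implied. *)
Definition qclass (Sigma : atype) (t : term (A + X)) : term (A + X) -> Prop :=
  fun s => implied Sigma (aeq t s).

Definition qcarrier (Sigma : atype) : Type :=
  { P : term (A + X) -> Prop | exists t, P = qclass Sigma t }.

Definition qproj (Sigma : atype) (t : term (A + X)) : qcarrier Sigma :=
  exist _ (qclass Sigma t) (ex_intro _ t eq_refl).

Definition qrep (Sigma : atype) (c : qcarrier Sigma) : term (A + X) :=
  proj1_sig (constructive_indefinite_description _ (proj2_sig c)).

Definition quotient (Sigma : atype) : structure :=
  {| carrier := qcarrier Sigma;
     fint := fun f args => qproj Sigma (tapp f (fun i => qrep (args i)));
     rint := fun r args => implied Sigma (arel r (fun i => qrep (args i))) |}.

Definition qval (Sigma : atype) : A + X -> quotient Sigma :=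
  fun z => qproj Sigma (tvar z).

Definition free_str : structure := quotient diagA.

(** D+(A[x]), written with the L(A)-terms in x naming the elements of A[x] *)
Definition diag_free : atype := fun phi => atom_sat (qval diagA) phi.

Definition closed_type (p : atype) : Prop :=
  forall phi, implied (fun psi => diag_free psi \/ p psi) phi -> p phi.

Definition quot_type (p : atype) : structure :=
  quotient (fun psi => diag_free psi \/ p psi).

Definition quot_map (p : atype) : A -> quot_type p :=
  fun a => qval (fun psi => diag_free psi \/ p psi) (inl a).

Definition strongly_T_prime (T : theory) (p : atype) : Prop :=
  closed_type p /\ Mod_T_forall T (quot_type p) /\ embedding (quot_map p).

Definition T_radical (T : theory) (pi : atype) : atype :=
  fun phi => forall p, strongly_T_prime T p -> (forall psi, pi psi -> p psi) -> p phi.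

Definition zero_set (pi : atype) : (X -> A) -> Prop :=
  fun abar => forall phi, pi phi -> atom_sat (pval (fun a => a) abar) phi.

Definition tp_a (V : (X -> A) -> Prop) : atype :=
  fun phi => forall abar, V abar -> atom_sat (pval (fun a => a) abar) phi.

End Free.
End FOL.

(* Main.v *)
Require Import Defs.
From Stdlib Require Import List.
From Stdlib Require Fin.
From Stdlib Require Import FunctionalExtensionality ProofIrrelevance PropExtensionality ClassicalEpsilon Arith Lia.
Set Implicit Arguments.

Section Gen.
Variable L : signature.

Lemma eval_map (M : structure L) V W (g : V -> W) (v : W -> M) (t : term L V) :
  eval v (map_term g t) = eval (fun x => v (g x)) t.
Proof.
  induction t as [x|f args IH]; simpl; auto.
  f_equal. apply functional_extensionality; intro i; apply IH.
Qed.

Lemma sat_map (M : structure L) V W (g : V -> W) (v : W -> M) (a : atom L V) :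
  atom_sat v (map_atom g a) <-> atom_sat (fun x => v (g x)) a.
Proof.
  destruct a as [t s|r args]; simpl.
  - rewrite !eval_map; tauto.
  - assert (E : (fun i => eval v (map_term g (args i))) = (fun i => eval (fun x => v (g x)) (args i))).
    { apply functional_extensionality; intro i; apply eval_map. }
    rewrite E; tauto.
Qed.

Lemma eval_agree (M : structure L) V (v w : V -> M) (t : term L V) :
  (forall z, occurs z t -> v z = w z) -> eval v t = eval w t.
Proof.
  induction t as [x|f args IH]; simpl; intro H.
  - apply H; reflexivity.
  - f_equal. apply functional_extensionality; intro i; apply IH.
    intros z Hz; apply H; exists i; exact Hz.
Qed.

Definition occ_atom {V} (z : V) (a : atom L V) : Prop :=
  match a with
  | aeq t s => occurs z t \/ occurs z s
  | @arel _ _ r args => exists i, occurs z (args i)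
  end.

Lemma sat_agree (M : structure L) V (v w : V -> M) (a : atom L V) :
  (forall z, occ_atom z a -> v z = w z) -> (atom_sat v a <-> atom_sat w a).
Proof.
  destruct a as [t s|r args]; simpl; intro H.
  - rewrite (@eval_agree M V v w t), (@eval_agree M V v w s); [tauto| |]; intros; apply H; auto.
  - assert (E : (fun i => eval v (args i)) = (fun i => eval w (args i))).
    { apply functional_extensionality; intro i; apply eval_agree; intros; apply H; eauto. }
    rewrite E; tauto.
Qed.

Lemma fin_bound m (P : Fin.t m -> nat -> Prop) :
  (forall i, exists N, forall k, P i k -> k < N) -> exists N, forall i k, P i k -> k < N.
Proof.
  revert P; induction m as [|m IH]; intros P H.
  - exists 0. intro i; apply (Fin.case0 (fun i => forall k, P i k -> k < 0) i).
  - destruct (H Fin.F1) as [N0 H0].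
    destruct (IH (fun i => P (Fin.FS i)) (fun i => H (Fin.FS i))) as [N1 H1].
    exists (N0 + N1). intro i. refine (Fin.caseS' i (fun i => forall k, P i k -> k < N0 + N1) _ _).
    + intros k Hk; specialize (H0 k Hk); lia.
    + intros j k Hk; specialize (H1 j k Hk); lia.
Qed.

Lemma term_bound P (t : term L (P + nat)) : exists N, forall k, occurs (inr k) t -> k < N.
Proof.
  induction t as [x|f args IH]; simpl.
  - destruct x as [p|j].
    + exists 0; intros k Hk; discriminate.
    + exists (S j); intros k Hk; injection Hk; lia.
  - destruct (@fin_bound _ (fun i k => occurs (inr k) (args i)) IH) as [N HN].
    exists N; intros k [i Hi]; eauto.
Qed.

Lemma atom_bound P (a : atom L (P + nat)) : exists N, forall k, occ_atom (inr k) a -> k < N.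
Proof.
  destruct a as [t s|r args]; simpl.
  - destruct (term_bound t) as [N1 H1]; destruct (term_bound s) as [N2 H2].
    exists (N1 + N2); intros k [Hk|Hk]; [specialize (H1 k Hk)|specialize (H2 k Hk)]; lia.
  - destruct (@fin_bound _ (fun i k => occurs (inr k) (args i)) (fun i => term_bound (args i))) as [N HN].
    exists N; intros k [i Hi]; eauto.
Qed.

Lemma list_bound P (l : list (atom L (P + nat))) :
  exists N, forall a k, In a l -> occ_atom (inr k) a -> k < N.
Proof.
  induction l as [|a l [N HN]].
  - exists 0; intros b k [].
  - destruct (atom_bound a) as [M HM]. exists (M + N).
    intros b k [<-|Hb] Hk; [specialize (HM k Hk)|specialize (HN b k Hb Hk)]; lia.
Qed.

End Gen.

Section Q.
Variable L : signature.
Variable A : structure L.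
Variable X : Type.
Variable S : atype A X.

Lemma qproj_eq (t s : term L (A + X)) : qproj S t = qproj S s <-> implied S (aeq t s).
Proof.
  split.
  - intro E. assert (H : qclass S s s) by (intros M v _; reflexivity).
    assert (E' := f_equal (@proj1_sig _ _) E). simpl in E'. rewrite <- E' in H. exact H.
  - intro H. unfold qproj.
    assert (E : qclass S t = qclass S s).
    { apply functional_extensionality; intro u. apply propositional_extensionality.
      unfold qclass, implied; simpl; split; intros H' M v HS; specialize (H M v HS); specialize (H' M v HS);
        simpl in *; congruence. }
    revert E. generalize (ex_intro (fun t0 => qclass S t = qclass S t0) t eq_refl).
    generalize (ex_intro (fun t0 => qclass S s = qclass S t0) s eq_refl).
    intros e1 e2 E. revert e2. rewrite E. intro e2. f_equal. apply proof_irrelevance.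
Qed.

Lemma qrep_eq (c : qcarrier S) : c = qproj S (qrep c).
Proof.
  unfold qrep. destruct (constructive_indefinite_description _ (proj2_sig c)) as [t Ht]. simpl.
  destruct c as [P HP]. simpl in Ht. subst P. unfold qproj. f_equal. apply proof_irrelevance.
Qed.

Lemma qrep_spec (t : term L (A + X)) : implied S (aeq (qrep (qproj S t)) t).
Proof.
  apply qproj_eq. symmetry. apply qrep_eq.
Qed.

Lemma eval_qval (t : term L (A + X)) : eval (qval S) t = qproj S t.
Proof.
  induction t as [x|f args IH]; simpl.
  - reflexivity.
  - change (qproj S (tapp (fun i => qrep (eval (qval S) (args i)))) = qproj S (tapp args)).
    apply qproj_eq. intros M v HS. simpl. f_equal. apply functional_extensionality; intro i.
    rewrite IH. apply (qrep_spec (args i) M v HS).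
Qed.

Lemma sat_qval (a : atom L (A + X)) : atom_sat (qval S) a <-> implied S a.
Proof.
  destruct a as [t s|r args]; simpl.
  - rewrite !eval_qval. apply qproj_eq.
  - change (implied S (arel (fun i => qrep (eval (qval S) (args i)))) <-> implied S (arel args)).
    assert (E : forall M v, (forall psi, S psi -> atom_sat (M:=M) v psi) ->
       (fun i => eval v (qrep (eval (qval S) (args i)))) = (fun i => eval v (args i))).
    { intros M v HS. apply functional_extensionality; intro i. rewrite eval_qval.
      apply (qrep_spec (args i) M v HS). }
    split; intros H M v HS; specialize (H M v HS); simpl in *; rewrite (E M v HS) in *; exact H.
Qed.

End Q.

Section E.
Variable L : signature.

Lemma hom_eval (M N : structure L) (e : M -> N) (He : homomorphism e) V (rho : V -> M) (t : term L V) :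
  eval (fun x => e (rho x)) t = e (eval rho t).
Proof.
  induction t as [x|f args IH]; simpl; auto.
  rewrite (proj1 He). f_equal. apply functional_extensionality; intro i; apply IH.
Qed.

Lemma hom_sat (M N : structure L) (e : M -> N) (He : homomorphism e) V (rho : V -> M) (a : atom L V) :
  atom_sat rho a -> atom_sat (fun x => e (rho x)) a.
Proof.
  destruct a as [t s|r args]; simpl.
  - rewrite !(hom_eval He). congruence.
  - assert (E : (fun i => eval (fun x => e (rho x)) (args i)) = (fun i => e (eval rho (args i)))).
    { apply functional_extensionality; intro i; apply (hom_eval He). }
    rewrite E. apply (proj2 He).
Qed.

Lemma emb_sat (M N : structure L) (e : M -> N) (He : embedding e) V (rho : V -> M) (a : atom L V) :
  atom_sat (fun x => e (rho x)) a <-> atom_sat rho a.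
Proof.
  destruct He as [Hh [Hi Hr]].
  destruct a as [t s|r args]; simpl.
  - rewrite !(hom_eval Hh). split; [apply Hi|congruence].
  - assert (E : (fun i => eval (fun x => e (rho x)) (args i)) = (fun i => e (eval rho (args i)))).
    { apply functional_extensionality; intro i; apply (hom_eval Hh). }
    rewrite E. split; [apply Hr|apply (proj2 Hh)].
Qed.

Lemma emb_Mod (T : theory L) (M N : structure L) (e : M -> N) (He : embedding e) :
  inhabited M -> Mod_T_forall T N -> Mod_T_forall T M.
Proof.
  intros Hin [_ HN]. split; auto.
  intros Phi Psi HT rho HPhi.
  destruct (HN Phi Psi HT (fun x => e (rho x))) as [b [Hb Hs]].
  - intros a Ha. apply (emb_sat He). auto.
  - exists b; split; auto. apply (emb_sat He) in Hs; exact Hs.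
Qed.

Lemma comp_emb (M Q N : structure L) (g : M -> Q) (e : Q -> N) (h : M -> N) :
  embedding e -> (forall a, e (g a) = h a) -> embedding h -> embedding g.
Proof.
  intros [[Hf Hr] [Hi Hrr]] Eg [[Hf' Hr'] [Hi' Hrr']].
  split; [split|split].
  - intros f args. apply Hi. rewrite Eg, Hf', Hf. f_equal. apply functional_extensionality; intro i; auto.
  - intros r args H. apply Hrr.
    assert (E : (fun i => e (g (args i))) = (fun i => h (args i))) by
      (apply functional_extensionality; intro i; auto).
    rewrite E. auto.
  - intros a a' E. apply Hi'. rewrite <- !Eg, E. reflexivity.
  - intros r args H. apply Hrr'.
    assert (E : (fun i => e (g (args i))) = (fun i => h (args i))) by
      (apply functional_extensionality; intro i; auto).
    rewrite <- E. apply Hr. exact H.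
Qed.

End E.

Section P.
Variable L : signature.
Variables A B : structure L.
Variable h : A -> B.
Hypothesis hemb : embedding h.
Variable X : Type.
Variable bv : X -> B.

Definition ptype : atype A X := fun chi => atom_sat (pval h bv) chi.
Definition Sg : atype A X := fun psi => diag_free psi \/ ptype psi.

Lemma diagA_sat phi : @diagA L A X phi -> ptype phi.
Proof.
  intros [phi0 [-> H0]]. unfold ptype. apply sat_map. simpl.
  apply (hom_sat (proj1 hemb) (fun a => a) phi0). exact H0.
Qed.

Lemma diag_sat phi : diag_free phi -> ptype phi.
Proof.
  intro H. apply sat_qval in H. apply (H B (pval h bv)). apply diagA_sat.
Qed.

Lemma impl_p phi : implied Sg phi <-> ptype phi.
Proof.
  split.
  - intro H. apply (H B (pval h bv)). intros psi [Hd|Hp]; [apply diag_sat|]; auto.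
  - intros Hp M v HS. apply HS. right; exact Hp.
Qed.

Definition ee (c : quot_type ptype) : B := eval (pval h bv) (qrep c).

Lemma ee_proj t : ee (qproj Sg t) = eval (pval h bv) t.
Proof.
  unfold ee. apply (qrep_spec Sg t B (pval h bv)).
  intros psi [Hd|Hp]; [apply diag_sat|]; auto.
Qed.

Lemma ee_emb : embedding ee.
Proof.
  split; [split|split].
  - intros f args. change (ee (qproj Sg (tapp (fun i => qrep (args i)))) = @fint L B f (fun i => ee (args i))).
    rewrite ee_proj. reflexivity.
  - intros r args H. change (implied Sg (arel (fun i => qrep (args i)))) in H.
    pose proof (proj1 (impl_p _) H) as H2. exact H2.
  - intros c c' E. rewrite (qrep_eq c), (qrep_eq c'). apply qproj_eq. apply impl_p. exact E.
  - intros r args H. change (implied Sg (arel (fun i => qrep (args i)))).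
    apply impl_p. exact H.
Qed.

Lemma point_prime (T : theory L) : inhabited A -> Mod_T_forall T B -> strongly_T_prime T ptype.
Proof.
  intros [a0] HB. split; [|split].
  - intros phi H. exact (proj1 (impl_p phi) H).
  - apply (emb_Mod ee_emb); auto. exact (inhabits (qproj Sg (tvar L (inl a0)))).
  - eapply comp_emb; [exact ee_emb| |exact hemb].
    intro a. unfold quot_map, qval. apply ee_proj.
Qed.

End P.

Definition tn {n} (i : Fin.t n) : nat := proj1_sig (Fin.to_nat i).
Definition tofin (n k : nat) : option (Fin.t n) :=
  match lt_dec k n with left H => Some (Fin.of_nat_lt H) | right _ => None end.

Lemma tofin_tn n (i : Fin.t n) : tofin n (tn i) = Some i.
Proof.
  unfold tofin, tn. destruct (lt_dec _ n) as [H|H].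
  - f_equal. rewrite <- (Fin.of_nat_to_nat_inv i) at 2. f_equal. apply proof_irrelevance.
  - exfalso. apply H. exact (proj2_sig (Fin.to_nat i)).
Qed.

Lemma tn_tofin n k : k < n -> exists i, tofin n k = Some i /\ tn i = k.
Proof.
  intro Hk. unfold tofin. destruct (lt_dec k n) as [H|H]; [|lia].
  exists (Fin.of_nat_lt H). split; auto. unfold tn. rewrite Fin.to_nat_of_nat. reflexivity.
Qed.

Definition gmap {P} n (z : P + Fin.t n) : P + nat :=
  match z with inl a => inl a | inr i => inr (tn i) end.
Definition trmap {P} (a0 : P) n (z : P + nat) : P + Fin.t n :=
  match z with inl a => inl a | inr k => match tofin n k with Some i => inr i | None => inl a0 end end.

Lemma id_emb L (A : structure L) : embedding (fun a : A => a).
Proof.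
  split; [split|split]; auto.
Qed.

Lemma agree_tr L (A B : structure L) (h : A -> B) (a0 : A) n (rho : nat -> B)
  (a : atom L (A + nat)) : (forall k, occ_atom (inr k) a -> k < n) ->
  (atom_sat (pval h rho) a <-> atom_sat (pval h (fun i : Fin.t n => rho (tn i))) (map_atom (trmap a0 n) a)).
Proof.
  intro Hb. rewrite sat_map. apply sat_agree. intros [x|k] Hz; simpl; auto.
  destruct (tn_tofin (Hb k Hz)) as [i [E1 E2]]. rewrite E1. simpl. rewrite E2. reflexivity.
Qed.

Theorem lemma4p17 (L : signature) (T : theory L)
  (HT : forall phi, T phi -> sentence phi)
  (A : structure L) (HA : Mod_T_forall T A) :
  weakly_geom_closed A (Mod_T_forall T) <->
  (forall (n : nat) (pi : list (atom L (A + Fin.t n))),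
     forall phi : atom L (A + Fin.t n),
       tp_a (zero_set (fun psi => In psi pi)) phi <->
       T_radical T (fun psi => In psi pi) phi).
Proof.
  assert (HinA : inhabited A) by exact (proj1 HA).
  destruct (proj1 HA) as [a0].
  split.
  - intros Hw n pi phi. split.
    + intros Htp p Hp Hpi.
      destruct Hp as [Hcl [HM Hemb]].
      set (S := fun psi => @diag_free L A (Fin.t n) psi \/ p psi).
      assert (Key : forall chi, atom_sat (qval S) chi <-> p chi).
      { intro chi. rewrite sat_qval. split; [apply Hcl|]. intros Hp M v HS. apply HS. right; exact Hp. }
      pose proof (Hw (quot_type p) HM (quot_map p) Hemb) as Hgc.
      specialize (Hgc (map (map_atom (@gmap A n)) pi) (map_atom (@gmap A n) phi)).
      set (rhoB := fun k => match tofin n k with Some i => qval S (inr i) | None => quot_map p a0 end).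
      assert (Tr : forall chi, atom_sat (pval (quot_map p) rhoB) (map_atom (@gmap A n) chi) <-> p chi).
      { intro chi. rewrite sat_map, <- Key. apply sat_agree. intros [x|i] _; simpl.
        - reflexivity.
        - unfold rhoB. rewrite tofin_tn. reflexivity. }
      apply Tr. apply Hgc.
      * intros rho HPhi. rewrite sat_map.
        assert (H1 : atom_sat (pval (fun a => a) (fun i : Fin.t n => rho (tn i))) phi).
        { apply Htp. intros psi Hpsi. specialize (HPhi _ (in_map _ _ _ Hpsi)).
          rewrite sat_map in HPhi. revert HPhi. apply sat_agree. intros [x|i] _; reflexivity. }
        revert H1. apply sat_agree. intros [x|i] _; reflexivity.
      * intros a Ha. apply in_map_iff in Ha. destruct Ha as [chi [<- Hchi]].
        apply Tr. apply Hpi. exact Hchi.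
    + intros Hrad abar Habar.
      apply (Hrad (ptype A A (fun a : A => a) abar)).
      * apply point_prime; auto. apply id_emb.
      * intros psi Hpsi. apply Habar. exact Hpsi.
  - intros Hall B HB h hemb Phi psi Htrue rho HPhi.
    destruct (list_bound (psi :: Phi)) as [n Hn].
    set (pi := map (map_atom (trmap a0 n)) Phi).
    set (psi' := map_atom (trmap a0 n) psi).
    assert (Htp : tp_a (zero_set (fun x => In x pi)) psi').
    { intros abar Hab.
      set (rhoA := fun k => pval (fun a : A => a) abar (trmap a0 n (inr k))).
      assert (Ag : forall chi, atom_sat (pval (fun a : A => a) rhoA) chi <->
                               atom_sat (pval (fun a : A => a) abar) (map_atom (trmap a0 n) chi)).
      { intro chi. rewrite sat_map. apply sat_agree. intros [x|k] _; reflexivity. }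
      apply Ag. apply Htrue. intros a Ha. apply Ag. apply Hab. unfold pi. apply in_map. exact Ha. }
    apply (proj1 (Hall n pi psi')) in Htp.
    set (bv := fun i : Fin.t n => rho (tn i)).
    assert (Hp : ptype A B h bv psi').
    { apply Htp.
      - apply point_prime; auto.
      - intros chi Hchi. unfold pi in Hchi. apply in_map_iff in Hchi. destruct Hchi as [a [<- Ha]].
        unfold ptype, bv. apply agree_tr.
        + intros k Hk. apply (Hn a k); simpl; auto.
        + apply HPhi; exact Ha. }
    unfold ptype, bv, psi' in Hp. apply agree_tr in Hp; auto.
    intros k Hk. apply (Hn psi k); simpl; auto.
Qed.
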